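(* Let $n,m\ge 3$ and let $G=P_n\square P_m$ be the grid graph. Every minimal resolving set of $G$ contains two boundary vertices lying on opposite sides of the grid.
   Context: The grid graph $P_n\square P_m$ has vertex set $\{(i,j):0\le i\le n-1,\ 0\le j\le m-1\}$, with $(i,j)$ adjacent to $(k,l)$ iff $|i-k|+|j-l|=1$; distance $d((i,j),(k,l))=|i-k|+|j-l|$. A vertex $w$ resolves $u,v$ if $d(w,u)\ne d(w,v)$; a set $R$ is resolving if every pair of distinct vertices is resolved by some vertex of $R$; a minimal resolving set is a resolving set $R$ such that no $R\setminus\{x\}$, $x\in R$, is resolving. Boundary vertices are the vertices of degree 2 or 3. The sides of the grid are the four lines with first coordinate $0$, first coordinate $n-1$, second coordinate $0$, second coordinate $m-1$; two sides are opposite if they share no vertex. Two boundary vertices lie on opposite sides if one lies on a side and the other on the opposite side. *)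

(* Defs.v *)
From mathcomp Require Import all_boot.
Set Implicit Arguments. Unset Strict Implicit. Unset Printing Implicit Defensive.

Definition gvert (n m : nat) := ('I_n * 'I_m)%type.

Definition absdiff (a b : nat) : nat := (a - b) + (b - a).

Definition gdist n m (u v : gvert n m) : nat :=
  absdiff u.1 v.1 + absdiff u.2 v.2.

Definition gadj n m (u v : gvert n m) : bool := gdist u v == 1.

Definition gdeg n m (u : gvert n m) : nat := #|[set v | gadj u v]|.

Definition boundary n m (u : gvert n m) : bool := (gdeg u == 2) || (gdeg u == 3).

Definition resolves n m (w u v : gvert n m) : bool := gdist w u != gdist w v.

Definition resolving n m (R : {set gvert n m}) : Prop :=
  forall u v : gvert n m, u != v -> exists2 w, w \in R & resolves w u v.

Definition minimal_resolving n m (R : {set gvert n m}) : Prop :=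
  resolving R /\ forall x, x \in R -> ~ resolving (R :\ x).

Definition on_opposite_sides n m (u v : gvert n m) : Prop :=
  ((nat_of_ord u.1 = 0 /\ nat_of_ord v.1 = n.-1) \/
   (nat_of_ord v.1 = 0 /\ nat_of_ord u.1 = n.-1)) \/
  ((nat_of_ord u.2 = 0 /\ nat_of_ord v.2 = m.-1) \/
   (nat_of_ord v.2 = 0 /\ nat_of_ord u.2 = m.-1)).

(* Main.v *)
Require Import Defs.
From mathcomp Require Import all_boot zify.
Set Implicit Arguments. Unset Strict Implicit. Unset Printing Implicit Defensive.

Section G.
Variables n m : nat.
Implicit Types i j : nat.
Definition mk (i j : nat) : gvert n.+1 m.+1 := (inord i, inord j).

Lemma mkE (v : gvert n.+1 m.+1) i j : nat_of_ord v.1 = i -> nat_of_ord v.2 = j -> v = mk i j.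
Proof. by case: v => a b /= <- <-; rewrite /mk !inord_val. Qed.

Lemma mk1 i j : i <= n -> nat_of_ord (mk i j).1 = i.
Proof. by move=> h; rewrite /= inordK. Qed.
Lemma mk2 i j : j <= m -> nat_of_ord (mk i j).2 = j.
Proof. by move=> h; rewrite /= inordK. Qed.

Lemma bnd3 (u x y z : gvert n.+1 m.+1) : gadj u x -> gadj u y -> x != y ->
  (forall v, gadj u v -> v = x \/ v = y \/ v = z) -> boundary u.
Proof.
move=> ax ay xy H; rewrite /boundary /gdeg.
set A := [set v | gadj u v].
have h2 : 2 <= #|A|.
  have <- : #|[set x; y]| = 2 by rewrite cards2 xy.
  apply: subset_leq_card; apply/subsetP=> v; rewrite !inE => /orP[] /eqP->;
  by rewrite ?ax ?ay.
have h3 : #|A| <= 3.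
  apply: (@leq_trans #|[:: x; y; z]|); last exact: card_size.
  apply: subset_leq_card; apply/subsetP=> v; rewrite !inE => /H.
  by move=> -[->|[->|->]]; rewrite eqxx ?orbT.
by move: h2 h3; case: #|A| => [|[|[|[|]]]].
Qed.

Lemma side_bnd (u : gvert n.+1 m.+1) : 2 <= n -> 2 <= m ->
  [\/ nat_of_ord u.1 = 0, nat_of_ord u.1 = n, nat_of_ord u.2 = 0 | nat_of_ord u.2 = m] -> boundary u.
Proof.
case: u => a b /= hn hm.
have ad : forall i j, i <= n -> j <= m ->
   gadj (a, b) (mk i j) = (absdiff a i + absdiff b j == 1).
  by move=> i j hi hj; rewrite /gadj /gdist mk1 // mk2.
have lt_a := ltn_ord a; have lt_b := ltn_ord b.
have ne : forall i j i' j', i <= n -> j <= m -> i' <= n -> j' <= m ->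
   (i != i') || (j != j') -> mk i j != mk i' j'.
  move=> i j i' j' hi hj hi' hj' /orP[] h; apply/negP=> /eqP E.
    by move: h; rewrite -(mk1 j hi) -(mk1 j' hi') E eqxx.
  by move: h; rewrite -(mk2 i hj) -(mk2 i' hj') E eqxx.
case=> h.
- have [hb|hb] := posnP b.
  + apply: (@bnd3 _ (mk 1 b) (mk 0 b.+1) (mk 0 b.+1)).
    * rewrite ad; rewrite /absdiff; lia.
    * rewrite ad; rewrite /absdiff; lia.
    * apply: ne; lia.
    * move=> v; rewrite /gadj /gdist /absdiff /= => /eqP E; move: (ltn_ord v.1) (ltn_ord v.2) => l1 l2.
      have : (nat_of_ord v.1 = 1 /\ nat_of_ord v.2 = b) \/ (nat_of_ord v.1 = 0 /\ nat_of_ord v.2 = b.+1) by lia.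
      by case=> -[h1 h2]; [left|right;left]; apply: mkE.
  + apply: (@bnd3 _ (mk 1 b) (mk 0 b.-1) (mk 0 b.+1)).
    * rewrite ad; rewrite /absdiff; lia.
    * rewrite ad; rewrite /absdiff; lia.
    * apply: ne; lia.
    * move=> v; rewrite /gadj /gdist /absdiff /= => /eqP E; move: (ltn_ord v.1) (ltn_ord v.2) => l1 l2.
      have : (nat_of_ord v.1 = 1 /\ nat_of_ord v.2 = b) \/ (nat_of_ord v.1 = 0 /\ nat_of_ord v.2 = b.-1) \/ (nat_of_ord v.1 = 0 /\ nat_of_ord v.2 = b.+1) by lia.
      by case=> [[h1 h2]|[[h1 h2]|[h1 h2]]]; [left|right;left|right;right]; apply: mkE.
- have [hb|hb] := posnP b.
  + apply: (@bnd3 _ (mk n.-1 b) (mk n b.+1) (mk n b.+1)).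
    * rewrite ad; rewrite /absdiff; lia.
    * rewrite ad; rewrite /absdiff; lia.
    * apply: ne; lia.
    * move=> v; rewrite /gadj /gdist /absdiff /= => /eqP E; move: (ltn_ord v.1) (ltn_ord v.2) => l1 l2.
      have : (nat_of_ord v.1 = n.-1 /\ nat_of_ord v.2 = b) \/ (nat_of_ord v.1 = n /\ nat_of_ord v.2 = b.+1) by lia.
      by case=> -[h1 h2]; [left|right;left]; apply: mkE.
  + apply: (@bnd3 _ (mk n.-1 b) (mk n b.-1) (mk n b.+1)).
    * rewrite ad; rewrite /absdiff; lia.
    * rewrite ad; rewrite /absdiff; lia.
    * apply: ne; lia.
    * move=> v; rewrite /gadj /gdist /absdiff /= => /eqP E; move: (ltn_ord v.1) (ltn_ord v.2) => l1 l2.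
      have : (nat_of_ord v.1 = n.-1 /\ nat_of_ord v.2 = b) \/ (nat_of_ord v.1 = n /\ nat_of_ord v.2 = b.-1) \/ (nat_of_ord v.1 = n /\ nat_of_ord v.2 = b.+1) by lia.
      by case=> [[h1 h2]|[[h1 h2]|[h1 h2]]]; [left|right;left|right;right]; apply: mkE.
- have [hb|hb] := posnP a.
  + apply: (@bnd3 _ (mk a 1) (mk a.+1 0) (mk a.+1 0)).
    * rewrite ad; rewrite /absdiff; lia.
    * rewrite ad; rewrite /absdiff; lia.
    * apply: ne; lia.
    * move=> v; rewrite /gadj /gdist /absdiff /= => /eqP E; move: (ltn_ord v.1) (ltn_ord v.2) => l1 l2.
      have : (nat_of_ord v.1 = a /\ nat_of_ord v.2 = 1) \/ (nat_of_ord v.1 = a.+1 /\ nat_of_ord v.2 = 0) by lia.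
      by case=> -[h1 h2]; [left|right;left]; apply: mkE.
  + apply: (@bnd3 _ (mk a 1) (mk a.-1 0) (mk a.+1 0)).
    * rewrite ad; rewrite /absdiff; lia.
    * rewrite ad; rewrite /absdiff; lia.
    * apply: ne; lia.
    * move=> v; rewrite /gadj /gdist /absdiff /= => /eqP E; move: (ltn_ord v.1) (ltn_ord v.2) => l1 l2.
      have : (nat_of_ord v.1 = a /\ nat_of_ord v.2 = 1) \/ (nat_of_ord v.1 = a.-1 /\ nat_of_ord v.2 = 0) \/ (nat_of_ord v.1 = a.+1 /\ nat_of_ord v.2 = 0) by lia.
      by case=> [[h1 h2]|[[h1 h2]|[h1 h2]]]; [left|right;left|right;right]; apply: mkE.
- have [hb|hb] := posnP a.
  + apply: (@bnd3 _ (mk a m.-1) (mk a.+1 m) (mk a.+1 m)).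
    * rewrite ad; rewrite /absdiff; lia.
    * rewrite ad; rewrite /absdiff; lia.
    * apply: ne; lia.
    * move=> v; rewrite /gadj /gdist /absdiff /= => /eqP E; move: (ltn_ord v.1) (ltn_ord v.2) => l1 l2.
      have : (nat_of_ord v.1 = a /\ nat_of_ord v.2 = m.-1) \/ (nat_of_ord v.1 = a.+1 /\ nat_of_ord v.2 = m) by lia.
      by case=> -[h1 h2]; [left|right;left]; apply: mkE.
  + apply: (@bnd3 _ (mk a m.-1) (mk a.-1 m) (mk a.+1 m)).
    * rewrite ad; rewrite /absdiff; lia.
    * rewrite ad; rewrite /absdiff; lia.
    * apply: ne; lia.
    * move=> v; rewrite /gadj /gdist /absdiff /= => /eqP E; move: (ltn_ord v.1) (ltn_ord v.2) => l1 l2.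
      have : (nat_of_ord v.1 = a /\ nat_of_ord v.2 = m.-1) \/ (nat_of_ord v.1 = a.-1 /\ nat_of_ord v.2 = m) \/ (nat_of_ord v.1 = a.+1 /\ nat_of_ord v.2 = m) by lia.
      by case=> [[h1 h2]|[[h1 h2]|[h1 h2]]]; [left|right;left|right;right]; apply: mkE.
Qed.
Lemma res_val (w : gvert n.+1 m.+1) i j i' j' : i <= n -> j <= m -> i' <= n -> j' <= m ->
  resolves w (mk i j) (mk i' j') =
  (absdiff w.1 i + absdiff w.2 j != absdiff w.1 i' + absdiff w.2 j').
Proof. by move=> *; rewrite /resolves /gdist !mk1 // !mk2. Qed.

Lemma mk_ne i j i' j' : i <= n -> j <= m -> i' <= n -> j' <= m ->
   (i != i') || (j != j') -> mk i j != mk i' j'.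
Proof.
  move=> hi hj hi' hj' /orP[] h; apply/negP=> /eqP E.
    by move: h; rewrite -(mk1 j hi) -(mk1 j' hi') E eqxx.
  by move: h; rewrite -(mk2 i hj) -(mk2 i' hj') E eqxx.
Qed.
Lemma corner_res (w : gvert n.+1 m.+1) i j i' j' : i <= n -> j <= m -> i' <= n -> j' <= m ->
  resolves w (mk i j) (mk i' j') -> forall P : nat -> nat -> Prop,
  (forall a b, a <= n -> b <= m ->
     absdiff a i + absdiff b j != absdiff a i' + absdiff b j' -> P a b) ->
  P w.1 w.2.
Proof.
move=> hi hj hi' hj'; rewrite res_val // => H P HP; apply: HP => //.
- by have := ltn_ord w.1.
- by have := ltn_ord w.2.
Qed.

Lemma oppL (u v : gvert n.+1 m.+1) : nat_of_ord u.1 = 0 -> nat_of_ord v.1 = n -> on_opposite_sides u v.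
Proof. by move=> *; left; left. Qed.
Lemma oppB (u v : gvert n.+1 m.+1) : nat_of_ord u.2 = 0 -> nat_of_ord v.2 = m -> on_opposite_sides u v.
Proof. by move=> *; right; left. Qed.
End G.

Theorem proposition2 (n m : nat) (hn : 3 <= n) (hm : 3 <= m)
  (R : {set gvert n m}) :
  minimal_resolving R ->
  exists u v, [/\ u \in R, v \in R, boundary u, boundary v
                & on_opposite_sides u v].
Proof.
case: n hn R => [|n] // hn; case: m hm => [|m] // hm R [res _].
have ne1 : @mk n m 0 1 != @mk n m 1 0 by apply: mk_ne; clear -hn hm; lia.
have [w1 w1R r1] := res _ _ ne1.
have ne2 : @mk n m n.-1 0 != @mk n m n 1 by apply: mk_ne; clear -hn hm; lia.
have [w2 w2R r2] := res _ _ ne2.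
have ne3 : @mk n m 0 m.-1 != @mk n m 1 m by apply: mk_ne; clear -hn hm; lia.
have [w3 w3R r3] := res _ _ ne3.
have ne4 : @mk n m n.-1 m != @mk n m n m.-1 by apply: mk_ne; clear -hn hm; lia.
have [w4 w4R r4] := res _ _ ne4.
have h1 := corner_res _ _ _ _ r1 (P := fun a b => a = 0 \/ b = 0).
have {h1} /= h1 : nat_of_ord w1.1 = 0 \/ nat_of_ord w1.2 = 0.
  apply: h1; last (move=> a b ha hb; rewrite /absdiff; clear -hn hm ha hb; lia); clear -hn hm; lia.
have h2 := corner_res _ _ _ _ r2 (P := fun a b => a = n \/ b = 0).
have {h2} /= h2 : nat_of_ord w2.1 = n \/ nat_of_ord w2.2 = 0.
  apply: h2; last (move=> a b ha hb; rewrite /absdiff; clear -hn hm ha hb; lia); clear -hn hm; lia.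
have h3 := corner_res _ _ _ _ r3 (P := fun a b => a = 0 \/ b = m).
have {h3} /= h3 : nat_of_ord w3.1 = 0 \/ nat_of_ord w3.2 = m.
  apply: h3; last (move=> a b ha hb; rewrite /absdiff; clear -hn hm ha hb; lia); clear -hn hm; lia.
have h4 := corner_res _ _ _ _ r4 (P := fun a b => a = n \/ b = m).
have {h4} /= h4 : nat_of_ord w4.1 = n \/ nat_of_ord w4.2 = m.
  apply: h4; last (move=> a b ha hb; rewrite /absdiff; clear -hn hm ha hb; lia); clear -hn hm; lia.
clear ne1 ne2 ne3 ne4 res.
have hn2 : 2 <= n by lia.
have hm2 : 2 <= m by lia.
have BL : forall w : gvert n.+1 m.+1, nat_of_ord w.1 = 0 -> boundary w.
  by move=> w hw; apply: side_bnd => //; apply: Or41.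
have BR : forall w : gvert n.+1 m.+1, nat_of_ord w.1 = n -> boundary w.
  by move=> w hw; apply: side_bnd => //; apply: Or42.
have BB : forall w : gvert n.+1 m.+1, nat_of_ord w.2 = 0 -> boundary w.
  by move=> w hw; apply: side_bnd => //; apply: Or43.
have BT : forall w : gvert n.+1 m.+1, nat_of_ord w.2 = m -> boundary w.
  by move=> w hw; apply: side_bnd => //; apply: Or44.
case: h1 => a1.
- case: h2 => a2.
  + exists w1, w2; split => //; [exact: BL|exact: BR|exact: oppL].
  + case: h4 => a4.
    * exists w1, w4; split => //; [exact: BL|exact: BR|exact: oppL].
    * exists w2, w4; split => //; [exact: BB|exact: BT|exact: oppB].
- case: h4 => a4.
  + case: h3 => a3.
    * exists w3, w4; split => //; [exact: BL|exact: BR|exact: oppL].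
    * exists w1, w3; split => //; [exact: BB|exact: BT|exact: oppB].
  + exists w1, w4; split => //; [exact: BB|exact: BT|exact: oppB].
Qed.
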